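(* Let $\mathcal{X},\mathcal{Y}$ be finite sets and $n\ge 1$. Let $\tilde{\Phi}_n=(\tilde{\varphi}_0,\tilde{\varphi}_2,\tilde{\psi})$ be a WAK code of blocklength $n$ with message sets $\tilde{\mathcal{M}}_0,\tilde{\mathcal{M}}_2$, and let $P_{\bar X\bar Y}\in\mathcal{P}_n(\mathcal{X}\times\mathcal{Y})$ be a joint type such that $$\log|\mathcal{T}^n_{\bar X}|\ge \log|\tilde{\mathcal{M}}_0|,$$ where $\mathcal{T}^n_{\bar X}$ is the type class of the marginal type $P_{\bar X}$. Then there exists a GW code $\Phi_n=(\varphi_0,\varphi_1,\varphi_2,\psi_1,\psi_2)$ of blocklength $n$ with message sets $\mathcal{M}_0,\mathcal{M}_1,\mathcal{M}_2$ such that \begin{align*} \log|\mathcal{M}_0| &\le \log|\tilde{\mathcal{M}}_0|+\log n+\log\log|\mathcal{X}|+2,\\ \log |\mathcal{M}_0||\mathcal{M}_1| &\le \log|\mathcal{T}^n_{\bar X}|+\log n+\log\log|\mathcal{X}|+2,\\ \log|\mathcal{M}_2| &= \log|\tilde{\mathcal{M}}_2|, \end{align*} and $$\mathrm{P}_{\mathtt{GW}}(\Phi_n\mid P_{\mathcal{T}^n_{\bar X\bar Y}})\le \mathrm{P}_{\mathtt{WAK}}(\tilde{\Phi}_n\mid P_{\mathcal{T}^n_{\bar X\bar Y}}).$$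
   Context: All logarithms are base 2. $\mathcal{P}_n(\mathcal{X}\times\mathcal{Y})$ is the set of joint types (empirical distributions) of sequences in $\mathcal{X}^n\times\mathcal{Y}^n$; for a joint type $P_{\bar X\bar Y}$, $\mathcal{T}^n_{\bar X\bar Y}$ is its type class (the set of pairs of sequences with that joint type) and $P_{\mathcal{T}^n_{\bar X\bar Y}}$ is the uniform distribution on $\mathcal{T}^n_{\bar X\bar Y}$. A WAK (Wyner–Ahlswede–Körner, source coding with a helper) code of blocklength $n$ is a triple $\tilde{\Phi}_n=(\tilde{\varphi}_0,\tilde{\varphi}_2,\tilde{\psi})$ of maps $\tilde{\varphi}_0:\mathcal{X}^n\to\tilde{\mathcal{M}}_0$, $\tilde{\varphi}_2:\mathcal{Y}^n\to\tilde{\mathcal{M}}_2$, $\tilde{\psi}:\tilde{\mathcal{M}}_0\times\tilde{\mathcal{M}}_2\to\mathcal{Y}^n$, with finite sets $\tilde{\mathcal{M}}_0,\tilde{\mathcal{M}}_2$. For $(X^n,Y^n)\sim P$, $\mathrm{P}_{\mathtt{WAK}}(\tilde{\Phi}_n\mid P)$ is the probability that $\tilde{\psi}(\tilde{\varphi}_0(X^n),\tilde{\varphi}_2(Y^n))\ne Y^n$. A GW (Gray–Wyner) code of blocklength $n$ is a tuple $\Phi_n=(\varphi_0,\varphi_1,\varphi_2,\psi_1,\psi_2)$ of maps $\varphi_i:\mathcal{X}^n\times\mathcal{Y}^n\to\mathcal{M}_i$ ($i=0,1,2$, finite sets $\mathcal{M}_i$), $\psi_1:\mathcal{M}_0\times\mathcal{M}_1\to\mathcal{X}^n$,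 $\psi_2:\mathcal{M}_0\times\mathcal{M}_2\to\mathcal{Y}^n$. For $(X^n,Y^n)\sim P$, $\mathrm{P}_{\mathtt{GW}}(\Phi_n\mid P)$ is the probability that $\big(\psi_1(\varphi_0(X^n,Y^n),\varphi_1(X^n,Y^n)),\psi_2(\varphi_0(X^n,Y^n),\varphi_2(X^n,Y^n))\big)\ne (X^n,Y^n)$. *)

(* Defs.v *)
From HB Require Import structures.
From mathcomp Require Import all_boot all_order all_algebra.
From mathcomp Require Import all_classical all_reals all_analysis.
Set Implicit Arguments. Unset Strict Implicit. Unset Printing Implicit Defensive.
Import Order.TTheory GRing.Theory Num.Theory.
Local Open Scope ring_scope.

(* Logarithm base 2 (MathComp-Analysis convention: ln x = 0 for x <= 0). *)
Definition log2 {R : realType} (x : R) : R := ln x / ln 2.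

Section Types.
Variables (X Y : finType) (n : nat).

Definition jtype (s : n.-tuple X * n.-tuple Y) : {ffun X * Y -> nat} :=
  [ffun ab => count_mem ab (zip s.1 s.2)].

Definition is_jtype (P : {ffun X * Y -> nat}) : Prop :=
  exists s : n.-tuple X * n.-tuple Y, jtype s = P.

Definition type_class (P : {ffun X * Y -> nat}) : {set n.-tuple X * n.-tuple Y} :=
  [set s | jtype s == P].

Definition marg1 (P : {ffun X * Y -> nat}) : {ffun X -> nat} :=
  [ffun a => (\sum_(b : Y) P (a, b))%N].

Definition xtype (x : n.-tuple X) : {ffun X -> nat} := [ffun a => count_mem a x].
Definition type_class1 (Q : {ffun X -> nat}) : {set n.-tuple X} :=
  [set x | xtype x == Q].
End Types.

Definition unif_on {R : realType} {S : finType} (A : {set S}) (s : S) : R :=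
  if s \in A then (#|A|%:R)^-1 else 0.

Definition prob {R : realType} {S : finType} (P : S -> R) (E : pred S) : R :=
  \sum_(s : S | E s) P s.

Definition P_WAK {R : realType} {X Y : finType} {n : nat} {M0 M2 : finType}
  (phi0 : n.-tuple X -> M0) (phi2 : n.-tuple Y -> M2)
  (psi : M0 -> M2 -> n.-tuple Y) (P : n.-tuple X * n.-tuple Y -> R) : R :=
  prob P (fun s => psi (phi0 s.1) (phi2 s.2) != s.2).

Definition P_GW {R : realType} {X Y : finType} {n : nat} {M0 M1 M2 : finType}
  (phi0 : n.-tuple X * n.-tuple Y -> M0)
  (phi1 : n.-tuple X * n.-tuple Y -> M1)
  (phi2 : n.-tuple X * n.-tuple Y -> M2)
  (psi1 : M0 -> M1 -> n.-tuple X) (psi2 : M0 -> M2 -> n.-tuple Y)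
  (P : n.-tuple X * n.-tuple Y -> R) : R :=
  prob P (fun s => (psi1 (phi0 s) (phi1 s), psi2 (phi0 s) (phi2 s)) != s).

(* Main.v *)
Require Import Defs.
From HB Require Import structures.
From mathcomp Require Import all_boot all_order all_algebra.
From mathcomp Require Import all_classical all_reals all_analysis.
From mathcomp Require Import zify lra.
Import Order.TTheory GRing.Theory Num.Theory.
Local Open Scope ring_scope.


Local Open Scope nat_scope.

Lemma count_le_ord (N b : nat) : (\sum_(q < N | q <= b) 1 <= b.+1)%N.
Proof.
rewrite big_mkcond /=.
elim: N => [|N IH]; first by rewrite big_ord0.
rewrite big_ord_recr /=.
have H : (\sum_(i < N) (if i <= b then 1 else 0) <= minn N b.+1)%N.
  elim: N {IH} => [|N IH]; first by rewrite big_ord0.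
  rewrite big_ord_recr /=; move: IH; set s := \sum_(_ < _) _; case: ifP => h; lia.
move: H; set s := \sum_(_ < _) _; case: ifP => h; lia.
Qed.

Lemma encode_exists (T0 K : finType) (f : T0 -> K) (T : {set T0}) (x0 : T0)
  (Hx0 : x0 \in T) (hk : (0 < #|K|)%N) (hkt : (#|K| <= #|T|)%N) :
  exists (c L : nat) (e0 : T0 -> 'I_c) (e1 : T0 -> 'I_L) (g : 'I_c -> K),
  [/\ (c <= 2 * #|K|)%N, (c * L <= 4 * #|T|)%N, (0 < c)%N && (0 < L)%N,
      {in T &, forall x y, e0 x = e0 y -> e1 x = e1 y -> x = y} &
      {in T, forall x, g (e0 x) = f x}].
Proof.
set k := #|K|; set t := #|T|.
pose L := (t %/ k).+1.
pose cls x := [set z in T | f z == f x].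
pose r x := index x (enum (cls x)).
have rlt x : x \in T -> (r x < #|cls x|)%N.
  move=> xT; rewrite /r cardE index_mem mem_enum inE xT eqxx //.
have clsle x : (#|cls x| <= t)%N by apply: subset_leq_card; apply/fintype.subsetP=> z; rewrite inE => /andP[].
pose h x : K * 'I_t.+1 := (f x, inord (r x %/ L)).
pose S := [set h x | x in T].
have hS : h x0 \in S by apply: imset_f.
exists #|S|, L, (fun x => enum_rank_in hS (h x)), (fun x => inord (r x %% L)),
  (fun j => (enum_val j).1).
pose a m := #|[set z in T | f z == m]|.
have bx z : z \in T -> (r z %/ L < t.+1)%N.
  move=> zT; rewrite ltnS; apply: leq_trans (leq_div _ _) _; exact: leq_trans (ltnW (rlt _ zT)) (clsle z).
have sumA : (\sum_m a m = t)%N.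
  rewrite /t -sum1_card (partition_big f xpredT) //=.
  by apply: eq_bigr => m _; rewrite /a -sum1_card; apply: eq_bigl => z; rewrite inE.
pose s := (\sum_m (a m %/ L))%N.
have sL : (s * L <= t)%N.
  rewrite /s big_distrl /= -sumA; apply: leq_sum => m _; exact: leq_divM.
have kL : (t < k * L)%N.
  rewrite /L mulnS; have := leq_divM t k; rewrite mulnC; have := ltn_pmod t hk.
  move: (t %/ k) (t %% k) (divn_eq t k) => q0 r0 ->; lia.
have slt : (s < k)%N.
  by rewrite -(ltn_pmul2r (ltn0Sn (t %/ k))) -/L; apply: leq_ltn_trans sL kL.
have Ssub : S \subset [set p : K * 'I_t.+1 | (p.2 <= a p.1 %/ L)%N].
  apply/fintype.subsetP => p /imsetP [x xT ->]; rewrite inE /= inordK ?bx //.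
  by apply: leq_div2r; apply: ltnW; exact: rlt.
have cS : (#|S| <= k + s)%N.
  apply: leq_trans (subset_leq_card Ssub) _.
  rewrite -sum1_card big_mkcond /=.
  set S' := [set p : K * 'I_t.+1 | _].
  have -> : (\sum_(i : K * 'I_t.+1) (if i \in S' then 1 else 0) =
      \sum_(m : K) \sum_(q : 'I_t.+1) (if (q <= a m %/ L)%N then 1 else 0))%N.
    by rewrite pair_big /=; apply: eq_bigr => -[m q] _; rewrite inE.

  rewrite /s /k -sum1_card -big_split /=; apply: leq_sum => m _.
  rewrite -big_mkcond /= add1n; exact: count_le_ord.
have kt : (k <= t)%N by [].
split.
- lia.
- have := leq_divM t k; rewrite /L; move: (t %/ k) sL kL => q0; rewrite /L => sL' kL' hq; nia.
- apply/andP; split=> //; by apply/card_gt0P; exists (h x0).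

- move=> x y xT yT /(congr1 enum_val); rewrite !enum_rankK_in ?imset_f //.
  case=> fxy qxy; move/(congr1 (@nat_of_ord _)). rewrite !inordK ?ltn_pmod // => mxy.
  have dxy : r x %/ L = r y %/ L.
    by move/(congr1 (@nat_of_ord _)): qxy; rewrite !inordK ?bx.
  have rxy : r x = r y by rewrite (divn_eq (r x) L) (divn_eq (r y) L) dxy mxy.
  have cxy : cls x = cls y by apply/setP=> z; rewrite !inE fxy.
  move: rxy; rewrite /r cxy; apply: (index_inj x); by rewrite mem_enum !inE ?xT ?yT ?fxy ?eqxx.
- by move=> x xT /=; rewrite enum_rankK_in ?imset_f.
Qed.

Lemma xtype_marg (X Y : finType) (n : nat) (s : n.-tuple X * n.-tuple Y) :
  xtype s.1 = marg1 (jtype s).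
Proof.
apply/ffunP => a; rewrite !ffunE.
under eq_bigr => b _ do rewrite ffunE.
have sz : size s.1 = size s.2 by rewrite !size_tuple.
rewrite -[in LHS](unzip1_zip (eq_leq sz)).
elim: (zip _ _) => [|[a' b'] z IH] /=; first by rewrite big1.
rewrite big_split /= -IH; congr (_ + _).
case: (eqVneq a' a) => [->|na].
  rewrite (bigD1 b') //= eqxx big1 // => b nb.
  by rewrite xpair_eqE eqxx /= eq_sym (negbTE nb).
rewrite big1 // => b _.
by rewrite xpair_eqE (negbTE na).
Qed.

Local Close Scope nat_scope.
Local Open Scope ring_scope.

Section L2.
Variable R : realType.
Lemma ln2_gt0 : 0 < ln (2 : R). Proof. by apply: ln_gt0; rewrite ltr1n. Qed.
Lemma log2_le (x y : R) : 0 < x -> x <= y -> log2 x <= log2 y.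
Proof.
move=> x0 xy; rewrite /log2 ler_pM2r ?invr_gt0 ?ln2_gt0 //.
by rewrite ler_ln ?posrE // (lt_le_trans x0 xy).
Qed.
Lemma log2_le_inv (x y : R) : 0 < x -> 0 < y -> log2 x <= log2 y -> x <= y.
Proof.
move=> x0 y0; rewrite /log2 ler_pM2r ?invr_gt0 ?ln2_gt0 //.
by rewrite ler_ln ?posrE.
Qed.
Lemma log2_mul (x y : R) : 0 < x -> 0 < y -> log2 (x * y) = log2 x + log2 y.
Proof. by move=> x0 y0; rewrite /log2 lnM ?posrE // mulrDl. Qed.
Lemma log2_2 : log2 (2 : R) = 1.
Proof. by rewrite /log2 divff // gt_eqF // ln2_gt0. Qed.
Lemma log2_4 (x : R) : 0 < x -> log2 (4 * x) = 2 + log2 x.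
Proof.
move=> x0; have -> : (4 : R) = 2 * 2 by rewrite -natrM.
by rewrite !log2_mul ?mulr_gt0 // log2_2.
Qed.
Lemma log2_ge0 (x : R) : 1 <= x -> 0 <= log2 x.
Proof. by move=> x1; apply: divr_ge0; [exact: ln_ge0 | exact: ltW (ln2_gt0)]. Qed.
Lemma loglog_ge0 (m : nat) : (0 < m)%N -> 0 <= log2 (log2 (m%:R : R)).
Proof.
case: m => // -[|m] _.
  by rewrite /log2 ln1 mul0r ln0 // mul0r.
apply: log2_ge0; have := @log2_le 2 m.+2%:R; rewrite log2_2; apply => //.
by rewrite ler_nat.
Qed.
End L2.

Theorem theorem1 (R : realType) (X Y : finType) (n : nat) (hn : (1 <= n)%N)
  (M0t M2t : finType)
  (phi0t : n.-tuple X -> M0t) (phi2t : n.-tuple Y -> M2t)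
  (psit : M0t -> M2t -> n.-tuple Y)
  (P : {ffun X * Y -> nat}) (hP : is_jtype n P)
  (hM : log2 (#|type_class1 n (marg1 P)|%:R : R) >= log2 (#|M0t|%:R : R)) :
  exists (M0 M1 M2 : finType)
    (phi0 : n.-tuple X * n.-tuple Y -> M0)
    (phi1 : n.-tuple X * n.-tuple Y -> M1)
    (phi2 : n.-tuple X * n.-tuple Y -> M2)
    (psi1 : M0 -> M1 -> n.-tuple X) (psi2 : M0 -> M2 -> n.-tuple Y),
    [/\ log2 (#|M0|%:R : R) <=
          log2 (#|M0t|%:R : R) + log2 (n%:R : R) + log2 (log2 (#|X|%:R : R)) + 2,
        log2 ((#|M0|%:R : R) * #|M1|%:R) <=
          log2 (#|type_class1 n (marg1 P)|%:R : R) + log2 (n%:R : R)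
          + log2 (log2 (#|X|%:R : R)) + 2,
        log2 (#|M2|%:R : R) = log2 (#|M2t|%:R : R) &
        P_GW (R:=R) phi0 phi1 phi2 psi1 psi2 (unif_on (type_class n P))
          <= P_WAK (R:=R) phi0t phi2t psit (unif_on (type_class n P))].

Proof.
case: hP => s0 hs0.
set T := type_class1 n (marg1 P).
have inT s : s \in type_class n P -> s.1 \in T.
  by rewrite /T /type_class1 !inE xtype_marg => /eqP ->.
have x0T : s0.1 \in T by apply: inT; rewrite inE hs0.
have hk : (0 < #|M0t|)%N by apply/card_gt0P; exists (phi0t s0.1).
have hX : (0 < #|X|)%N by apply/card_gt0P; exists (tnth s0.1 (Ordinal hn)).
have ht : (0 < #|T|)%N by apply/card_gt0P; exists s0.1.
have hkt : (#|M0t| <= #|T|)%N.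
  by rewrite -(ler_nat R); apply: log2_le_inv hM; rewrite ltr0n.
have [c [L [e0 [e1 [g [c2k cL /andP[c0 L0] inj ge]]]]]] := @encode_exists _ _ phi0t T _ x0T hk hkt.
exists 'I_c, 'I_L, M2t, (fun s => e0 s.1), (fun s => e1 s.1), (fun s => phi2t s.2),
  (fun j o => odflt s0.1 [pick x in T | (e0 x == j) && (e1 x == o)]),
  (fun j m => psit (g j) m).
have lln := @loglog_ge0 R _ hX.
have ln0 : 0 <= log2 (n%:R : R) by apply: log2_ge0; rewrite ler1n.
rewrite !card_ord; split => //.
- have : log2 (c%:R : R) <= log2 (4 * #|M0t|%:R).
    by apply: log2_le; rewrite ?ltr0n // -natrM ler_nat; lia.
  rewrite log2_4 ?ltr0n //; lra.
- have : log2 (c%:R * L%:R : R) <= log2 (4 * #|T|%:R).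
    by apply: log2_le; rewrite -!natrM ?ltr0n ?muln_gt0 ?c0 // ler_nat.
  rewrite log2_4 ?ltr0n //; lra.
rewrite /P_GW /P_WAK /prob big_mkcond [X in _ <= X]big_mkcond /=; apply: ler_sum => s _.
rewrite /unif_on; case: (boolP (s \in type_class n P)) => sT; last by case: ifP; case: ifP.
have u0 : 0 <= (#|type_class n P|%:R : R)^-1 by rewrite invr_ge0 ler0n.
case: ifP => E1; case: ifP => E2 //; move/negbT/negbNE/eqP: E2 => wak; move/negP: E1 => [];
have s1T := inT _ sT.
case: s wak sT s1T => x y /= wak sT s1T; apply/eqP; congr (_, _).
  case: pickP => [x' /andP[x'T /andP[/eqP e0x /eqP e1x]]|/(_ x)] /=.
    exact: inj.
  by rewrite s1T !eqxx.
by rewrite ge.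
Qed.
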